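(* Let $n \geq 1$ be an integer and consider Nim on the hypercube $Q_{2n}$ in which every edge has weight $1$, with the playing piece $\Delta$ starting at the vertex $\emptyset$. Then the second player $P_2$ has a winning strategy.
   Context: Nim on a graph: two players agree on a finite simple undirected graph $G$ whose edges carry positive integer weights, and a starting vertex on which a playing piece $\Delta$ is placed. Players $P_1$ (who moves first) and $P_2$ alternate. On a turn, the player chooses an edge of positive weight incident with the vertex currently holding $\Delta$, lowers that edge's weight by a positive integer amount, and moves $\Delta$ to the other endpoint of that edge. Edges of weight $0$ are no longer playable. A player who cannot move (no playable edge is incident with $\Delta$) loses. With unit weight, each edge can be traversed at most once in total. The hypercube $Q_m$ has as vertices the subsets $X \subseteq \{1,\dots,m\}$, two vertices being adjacent iff they differ in exactly one element; $\emptyset$ denotes the empty set. *)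

(* Defs.v *)
From mathcomp Require Import all_boot.
Set Implicit Arguments. Unset Strict Implicit. Unset Printing Implicit Defensive.

(* Edge weights are stored as a function
   on 2-element vertex sets: the weight of edge {x,y} is [w [set x; y]]
   (values on non-edges are irrelevant: they are never read nor changed). *)

Definition simple_graph (V : finType) (adj : rel V) : Prop :=
  irreflexive adj /\ symmetric adj.

Definition nim_pos (V : finType) : Type := (V * ({set V} -> nat))%type.

Definition nim_move (V : finType) (adj : rel V) (p q : nim_pos V) : Prop :=
  let: (v, w) := p in
  let: (u, w') := q in
  adj v u /\
  exists k : nat, 0 < k /\ k <= w [set v; u] /\
    forall e : {set V}, w' e = (if e == [set v; u] then w e - k else w e).

(* Winning / losing positions for the player about to move (the game is
   finite, so the inductive characterisation = existence of a winning
   strategy).  A player who cannot move loses. *)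
Inductive nim_lose (V : finType) (adj : rel V) : nim_pos V -> Prop :=
| NimLose p : (forall q, nim_move adj p q -> nim_win adj q) -> nim_lose adj p
with nim_win (V : finType) (adj : rel V) : nim_pos V -> Prop :=
| NimWin p q : nim_move adj p q -> nim_lose adj q -> nim_win adj p.

(* The player to move from [p] is P_1; P_2 has a winning strategy iff the
   starting position is losing for the player to move. *)
Definition second_player_wins (V : finType) (adj : rel V) (p : nim_pos V) :=
  nim_lose adj p.

Definition hypercube_adj (m : nat) : rel {set 'I_m} :=
  fun A B => #|(A :\: B) :|: (B :\: A)| == 1.

Definition unit_weights (V : finType) : {set V} -> nat := fun _ => 1.
Arguments hypercube_adj : clear implicits.
Arguments unit_weights : clear implicits.

(* Main.v *)
Require Import Defs.
From mathcomp Require Import all_boot.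
Set Implicit Arguments. Unset Strict Implicit. Unset Printing Implicit Defensive.

Definition hadj (I : finType) : rel {set I} :=
  fun A B => #|(A :\: B) :|: (B :\: A)| == 1.

Definition flip (I : finType) (A : {set I}) (j : I) : {set I} :=
  [set x | (x \in A) (+) (x == j)].

Lemma in_flip (I : finType) (A : {set I}) j x : (x \in flip A j) = (x \in A) (+) (x == j).
Proof. by rewrite inE. Qed.

Lemma flipK (I : finType) (A : {set I}) j : flip (flip A j) j = A.
Proof. by apply/setP=> x; rewrite !in_flip addbK. Qed.

Lemma flipC (I : finType) (A : {set I}) i j : flip (flip A i) j = flip (flip A j) i.
Proof. by apply/setP=> x; rewrite !in_flip addbAC. Qed.

Lemma flip_inj (I : finType) (A : {set I}) i j : flip A i = flip A j -> i = j.
Proof.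
move/setP/(_ i); rewrite !in_flip eqxx.
by case: (i \in A); case: eqP => //= _ /negP; rewrite ?negbK.
Qed.

Lemma flip_neq (I : finType) (A : {set I}) j : flip A j != A.
Proof.
apply/eqP=> /setP/(_ j); rewrite in_flip eqxx; by case: (j \in A).
Qed.

Lemma adj_flip (I : finType) (A : {set I}) j : hadj A (flip A j).
Proof.
rewrite /hadj; have -> : A :\: flip A j :|: flip A j :\: A = [set j].
  by apply/setP=> x; rewrite !inE; case: (x \in A); case: (x == j).
by rewrite cards1.
Qed.

Lemma adj_ex (I : finType) (A B : {set I}) : hadj A B -> exists j, B = flip A j.
Proof.
move/cards1P=> [j hj]; exists j; apply/setP=> x; move/setP/(_ x): hj.
by rewrite !inE; case: (x \in A); case: (x \in B); case: (x == j).
Qed.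
Definition bal (I : finType) (p : I -> I) (A : {set I}) c := (c \in A) == (p c \in A).
Definition edge (I : finType) (A : {set I}) c := [set A; flip A c].
Definition pv (I : finType) (p : I -> I) (A : {set I}) c := flip (flip A c) (p c).

Lemma peq (I : finType) (p : I -> I) (pK : involutive p) c j : (p c == j) = (c == p j).
Proof. by rewrite -{1}(pK j) (inj_eq (can_inj pK)). Qed.

Lemma in_pv (I : finType) (p : I -> I) (A : {set I}) c x :
  (x \in pv p A c) = (x \in A) (+) (x == c) (+) (x == p c).
Proof. by rewrite !in_flip. Qed.

Lemma pvK (I : finType) (p : I -> I) (pK : involutive p) (A : {set I}) c :
  pv p (pv p A c) (p c) = A.
Proof. by rewrite /pv flipK pK flipK. Qed.

Lemma pv_eq (I : finType) (p : I -> I) (pK : involutive p) (X Z : {set I}) c :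
  (pv p X c == Z) = (X == pv p Z (p c)).
Proof.
apply/eqP/eqP => [<-|->]; first by rewrite pvK.
by have := pvK pK Z (p c); rewrite pK.
Qed.

Lemma pv_bal (I : finType) (p : I -> I) (pK : involutive p) (pN : forall i, p i != i)
  (X : {set I}) c : bal p X c -> bal p (pv p X c) (p c).
Proof.
rewrite /bal !in_pv pK !eqxx (negbTE (pN c)) [c == p c]eq_sym (negbTE (pN c)).
by rewrite !addbF !addbT => /eqP->.
Qed.

Lemma pv_fullbal (I : finType) (p : I -> I) (pK : involutive p)
  (B : {set I}) j : (forall c, bal p B c) -> forall c, bal p (pv p B j) c.
Proof.
move=> hB c; rewrite /bal !in_pv (eqP (hB c)) (inj_eq (can_inj pK)) (peq pK).
by rewrite addbAC.
Qed.

Lemma edge_pv (I : finType) (p : I -> I) (X : {set I}) c :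
  edge (pv p X c) (p c) = [set flip X c; pv p X c].
Proof. by rewrite /edge /pv flipK setUC. Qed.

Lemma edge_inj (I : finType) (p : I -> I) (pN : forall i, p i != i) (X Z : {set I}) c d :
  bal p X c -> bal p Z d -> edge X c = edge Z d -> X = Z /\ c = d.
Proof.
move=> bX bZ he.
have hX : X \in edge Z d by rewrite -he set21.
have hY : flip X c \in edge Z d by rewrite -he !inE eqxx orbT.
move: hX hY; rewrite !in_set2 => /orP[/eqP eXZ|/eqP eX]; subst.
  by rewrite (negbTE (flip_neq _ _)) /= => /eqP/flip_inj.
rewrite (negbTE (flip_neq _ _)) orbF => /eqP e.
have e2 : flip Z d = flip Z c by rewrite -[in RHS]e flipK.
move: (flip_inj e2) => edc; subst.
move: bX bZ; rewrite /bal !in_flip eqxx (negbTE (pN c)) addbF addbT.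
by move/eqP=> <-; case: (c \in Z).
Qed.

Lemma edge_eq (I : finType) (p : I -> I) (pN : forall i, p i != i) (X Z : {set I}) c d :
  bal p X c -> bal p Z d -> (edge X c == edge Z d) = (X == Z) && (c == d).
Proof.
move=> bX bZ; apply/eqP/andP => [/(edge_inj pN bX bZ) [-> ->] //|[/eqP-> /eqP->] //].
Qed.

Lemma sum_lt (T : finType) (f g : T -> nat) a :
  (forall x, f x <= g x) -> f a < g a -> \sum_x f x < \sum_x g x.
Proof.
move=> hfg ha; rewrite (bigD1 a) //= [X in _ < X](bigD1 a) //=.
by rewrite -addSn; apply: leq_add => //; apply: leq_sum.
Qed.
Lemma main_gen (I : finType) (p : I -> I) (pK : involutive p) (pN : forall i, p i != i) N :
  forall (B : {set I}) (w : {set {set I}} -> nat), \sum_e w e < N ->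
  (forall c, bal p B c) -> (forall e, w e <= 1) ->
  (forall X c, bal p X c -> w (edge X c) = w (edge (pv p X c) (p c))) ->
  nim_lose (@hadj I) (B, w).
Proof.
elim: N => [//|N IH] B w hs hB h1 hw.
constructor => [[u w1]] /= [hu [k [k0 [kle hw1]]]].
have [j eu] := adj_ex hu; subst u.
have bBj : bal p B j := hB j.
have bpv : bal p (pv p B j) (p j) := pv_bal pK pN bBj.
have wE1 : w (edge B j) = 1.
  by apply/eqP; rewrite eqn_leq h1 /=; apply: leq_trans kle.
have ek : k = 1 by apply/eqP; rewrite eqn_leq k0 -wE1 kle.
subst k.
set E2 := edge (pv p B j) (p j).
set w2 := fun e => if e == E2 then w1 e - 1 else w1 e.
have hE12 : (E2 == edge B j) = false.
  rewrite (edge_eq pN bpv bBj); apply/negbTE/negP => /andP[_ /eqP h].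
  by move: (pN j); rewrite h eqxx.
have w1le : forall e, w1 e <= w e.
  by move=> e; rewrite hw1; case: ifP => // _; apply: leq_subr.
have w2le : forall e, w2 e <= w1 e.
  by move=> e; rewrite /w2; case: ifP => // _; apply: leq_subr.
apply: (@NimWin _ _ _ (pv p B j, w2)).
  split; first exact: adj_flip.
  exists 1; split => //; split.
    rewrite -edge_pv -/E2 hw1 hE12 /E2 -hw // wE1 //.
  by move=> e; rewrite -edge_pv -/E2.
apply: IH.
- rewrite ltnS in hs; apply: leq_trans hs; apply: (@leq_ltn_trans (\sum_e w1 e)).
    by apply: leq_sum => e _; apply: w2le.
  apply: (@sum_lt _ _ _ (edge B j)) => //.
  by rewrite hw1 eqxx wE1.
- exact: pv_fullbal.
- by move=> e; apply: leq_trans (w2le e) (leq_trans (w1le e) (h1 e)).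
move=> X c bX.
have bX' : bal p (pv p X c) (p c) := pv_bal pK pN bX.
rewrite /w2 !hw1 /E2 !(edge_eq pN _ bpv) // !(edge_eq pN _ bBj) //.
rewrite !pv_eq // (inj_eq (can_inj pK)) (peq pK) -(hw _ _ bX).
have -> : (X == pv p (pv p B j) (p c)) && (c == j) = (X == B) && (c == j).
  by case: (eqVneq c j) => [->|]; rewrite ?andbF ?pvK.
have -> : (X == pv p B (p c)) && (c == p j) = (X == pv p B j) && (c == p j).
  by case: (eqVneq c (p j)) => [->|]; rewrite ?andbF ?pK.
by case: (_ && _); case: (_ && _).
Qed.

Lemma pr_lt n (i : 'I_(2 * n)) : (if odd i then i.-1 else i.+1) < 2 * n.
Proof.
case: i => i hi /=; case: ifP => hodd.
  exact: leq_ltn_trans (leq_pred i) hi.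
rewrite ltn_neqAle hi andbT; apply/eqP => h.
by have := congr1 odd h; rewrite /= hodd oddM.
Qed.

Definition pr n (i : 'I_(2 * n)) : 'I_(2 * n) := Ordinal (pr_lt i).

Lemma prK n : involutive (@pr n).
Proof.
move=> [[|i] hi]; apply: val_inj => //=.
by case h: (odd i) => /=; rewrite ?h.
Qed.

Lemma prN n (i : 'I_(2 * n)) : pr i != i.
Proof.
case: i => [[|i] hi]; rewrite -val_eqE /= ?(ltn_eqF (ltnSn _)) //.
by case: ifP => _; rewrite ?eqSS ?(gtn_eqF (ltnSn _)) ?(ltn_eqF (ltnSn _)).
Qed.

Theorem mainTheorem3 (n : nat) (hn : 1 <= n) :
  second_player_wins (hypercube_adj (2 * n))
    (pair (set0 : {set 'I_(2 * n)}) (unit_weights {set 'I_(2 * n)})).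
Proof.
apply: (@main_gen _ _ (@prK n) (@prN n) (\sum_e unit_weights {set 'I_(2 * n)} e).+1).
- by [].
- by move=> c; rewrite /bal !inE.
- by [].
- by [].
Qed.
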